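(* Let $v\ge 4$ and $\theta\in[0,1]$, and consider the tipsy cop and drunken robber game on the cycle graph $C_v$. For $1\le i\le\lfloor v/2\rfloor$ and $m\ge 1$ the following hold. If $v$ is even: \[ R_m^i=\begin{cases}\tfrac12 C^{2}_{m-1}, & i=1,\\ \tfrac12 C^{i-1}_{m-1}+\tfrac12 C^{i+1}_{m-1}, & 1<i<v/2,\\ C^{v/2-1}_{m-1}, & i=v/2,\end{cases} \qquad C_m^i=\begin{cases}\tfrac{\theta}{2}R^{2}_{m-1}, & i=1,\\ \left(1-\tfrac{\theta}{2}\right)R^{i-1}_{m-1}+\tfrac{\theta}{2}R^{i+1}_{m-1}, & 1<i<v/2,\\ R^{v/2-1}_{m-1}, & i=v/2.\end{cases} \] If $v$ is odd: \[ R_m^i=\begin{cases}\tfrac12 C^{2}_{m-1}, & i=1,\\ \tfrac12 C^{i-1}_{m-1}+\tfrac12 C^{i+1}_{m-1}, & 1<i<\frac{v-1}{2},\\ \tfrac12 C^{(v-3)/2}_{m-1}+\tfrac12 C^{(v-1)/2}_{m-1}, & i=\frac{v-1}{2},\end{cases} \qquad C_m^i=\begin{cases}\tfrac{\theta}{2}R^{2}_{m-1}, & i=1,\\ \left(1-\tfrac{\theta}{2}\right)R^{i-1}_{m-1}+\tfrac{\theta}{2}R^{i+1}_{m-1}, & 1<i<\frac{v-1}{2},\\ \left(1-\tfrac{\theta}{2}\right)R^{(v-3)/2}_{m-1}+\tfrac{\theta}{2}R^{(v-1)/2}_{m-1}, & i=\frac{v-1}{2}.\end{cases} \]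
   Context: Tipsy cop and drunken robber game on a graph: a cop and a robber occupy distinct vertices and alternate moves; on each move the mover must move to an adjacent vertex (no staying put). The robber always moves to a uniformly random neighbor. The cop, independently at each of her moves, with probability $\theta$ moves to a uniformly random neighbor and with probability $1-\theta$ moves to a neighbor that decreases her distance to the robber (onto the robber if adjacent). All random choices are independent; the robber is captured (game over) as soon as both occupy the same vertex. On the cycle $C_v$, for $1\le i\le \lfloor v/2\rfloor$, $R^i_m$ denotes the probability that, starting with cop and robber at distance $i$ and the robber to move first (then alternating), no capture occurs during the first $m$ moves; $C^i_m$ is the same probability when the cop moves first. By convention $R^i_0=C^i_0=1$. *)

(* Defs.v *)
From mathcomp Require Import all_boot all_order all_algebra.
Set Implicit Arguments. Unset Strict Implicit. Unset Printing Implicit Defensive.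
Import Order.TTheory GRing.Theory Num.Theory.
Local Open Scope ring_scope.

(* The cycle C_v: vertices are the naturals 0, ..., v-1; x is adjacent to
   (x+1) mod v and (x+v-1) mod v. *)
Definition cnext (v x : nat) : nat := ((x + 1) %% v)%N.
Definition cprev (v x : nat) : nat := ((x + v - 1) %% v)%N.

Definition cdist (v x y : nat) : nat :=
  minn ((x + v - y) %% v) ((y + v - x) %% v).

Definition greedy_move (v : nat) (g : nat -> nat -> nat) : Prop :=
  forall c r, (c < v)%N -> (r < v)%N -> c <> r ->
    (g c r = cnext v c \/ g c r = cprev v c) /\ (cdist v (g c r) r < cdist v c r)%N.

(* surv v th g m rt c r : probability that no capture occurs during the next
   m moves, starting with cop at c, robber at r (c <> r), robber to move if
   rt = true, cop to move if rt = false, moves alternating. *)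
Fixpoint surv {R : realFieldType} (v : nat) (th : R) (g : nat -> nat -> nat)
    (m : nat) (rt : bool) (c r : nat) : R :=
  match m with
  | 0 => 1
  | m'.+1 =>
    let alive x y := if x == y then 0 else surv v th g m' (~~ rt) x y in
    if rt then
      (alive c (cnext v r) + alive c (cprev v r)) / 2
    else
      th * ((alive (cnext v c) r + alive (cprev v c) r) / 2)
      + (1 - th) * alive (g c r) r
  end.

(* R^i_m and C^i_m: cop at vertex 0, robber at vertex i (distance i). *)
Definition Rprob {R : realFieldType} (v : nat) (th : R) g (i m : nat) : R :=
  surv v th g m true 0%N i.
Definition Cprob {R : realFieldType} (v : nat) (th : R) g (i m : nat) : R :=
  surv v th g m false 0%N i.

(* Main.v *)
Require Import Defs.
From mathcomp Require Import all_boot all_order all_algebra.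
From mathcomp Require Import zify ring.
Import Order.TTheory GRing.Theory Num.Theory.

Lemma modP x v : (0 < v)%N -> (x < 2 * v)%N ->
  ((x < v)%N /\ x %% v = x) \/ ((v <= x)%N /\ x %% v = x - v).
Proof.
move=> v0 xl; case: (ltnP x v) => h; [left; split=>//; exact: modn_small|].
right; split=>//. rewrite -{1}(subnK h) modnDr modn_small //; lia.
Qed.

Ltac em v := try (match goal with |- context [(?x %% v)%N] =>
    lazymatch x with context [modn] => fail | _ =>
      let H1 := fresh in let H2 := fresh in
      have [[H1 H2]|[H1 H2]] := @modP x v ltac:(lia) ltac:(lia); rewrite H2; clear H2 end end;
      try (exfalso; lia); em v).

Definition kap v x y := ((y + v - x) %% v)%N.
Definition D v k := minn k (v - k).

Lemma kap_lt v x y : (0 < v)%N -> (kap v x y < v)%N.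
Proof. by move=> v0; rewrite /kap ltn_pmod. Qed.
Lemma cnext_lt v x : (0 < v)%N -> (cnext v x < v)%N.
Proof. by move=> v0; rewrite /cnext ltn_pmod. Qed.
Lemma cprev_lt v x : (0 < v)%N -> (cprev v x < v)%N.
Proof. by move=> v0; rewrite /cprev ltn_pmod. Qed.
Lemma cdistE v x y : (0 < v)%N -> (x < v)%N -> (y < v)%N ->
  cdist v x y = D v (kap v x y).
Proof. move=> *; rewrite /D /cdist /kap. em v. all: lia. Qed.
Lemma kapNr v x y : (0 < v)%N -> (x < v)%N -> (y < v)%N -> kap v x (cnext v y) = cnext v (kap v x y).
Proof. move=> *; rewrite /cnext /kap. em v. all: lia. Qed.
Lemma kapPr v x y : (0 < v)%N -> (x < v)%N -> (y < v)%N -> kap v x (cprev v y) = cprev v (kap v x y).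
Proof. move=> *; rewrite /cprev /kap. em v. all: lia. Qed.
Lemma kapNl v x y : (0 < v)%N -> (x < v)%N -> (y < v)%N -> kap v (cnext v x) y = cprev v (kap v x y).
Proof. move=> *; rewrite /cnext /cprev /kap. em v. all: lia. Qed.
Lemma kapPl v x y : (0 < v)%N -> (x < v)%N -> (y < v)%N -> kap v (cprev v x) y = cnext v (kap v x y).
Proof. move=> *; rewrite /cnext /cprev /kap. em v. all: lia. Qed.
Lemma kap0 v y : (0 < v)%N -> (y < v)%N -> kap v 0 y = y.
Proof. move=> *; rewrite /kap. em v. all: lia. Qed.
Lemma kap_eq0 v x y : (0 < v)%N -> (x < v)%N -> (y < v)%N -> (kap v x y == 0)%N = (x == y).
Proof. move=> *; rewrite /kap. em v. all: (apply/eqP/eqP; lia). Qed.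

Lemma DsymN v k : (0 < k < v)%N -> D v (cnext v k) = D v (cprev v (v - k)).
Proof. move=> *; rewrite /D /cnext /cprev. em v. all: lia. Qed.
Lemma DsymP v k : (0 < k < v)%N -> D v (cprev v k) = D v (cnext v (v - k)).
Proof. move=> *; rewrite /D /cnext /cprev. em v. all: lia. Qed.
Lemma DN v k : (k < v)%N -> (D v k <= D v (cnext v k) + 1)%N.
Proof. move=> *; rewrite /D /cnext. em v. all: lia. Qed.
Lemma DP v k : (k < v)%N -> (D v k <= D v (cprev v k) + 1)%N.
Proof. move=> *; rewrite /D /cprev. em v. all: lia. Qed.

Lemma Dk v k : (0 < k < v)%N -> D v k = k \/ (D v k = v - k /\ (0 < v - k < v)%N).
Proof. rewrite /D; lia. Qed.

Lemma factR v c r : (0 < v)%N -> (c < v)%N -> (r < v)%N -> c <> r ->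
  let d := cdist v c r in
  (cdist v c (cnext v r) = cdist v 0 (cnext v d) /\ cdist v c (cprev v r) = cdist v 0 (cprev v d)) \/
  (cdist v c (cnext v r) = cdist v 0 (cprev v d) /\ cdist v c (cprev v r) = cdist v 0 (cnext v d)).
Proof.
move=> v0 cv rv cr /=.
have kv := @kap_lt v c r v0.
have k0 : kap v c r != 0%N by rewrite kap_eq0 //; apply/eqP.
have dv : (cdist v c r < v)%N by rewrite cdistE // /D; lia.
have dv' : (D v (kap v c r) < v)%N by rewrite -cdistE.
rewrite !cdistE ?cnext_lt ?cprev_lt // !kapNr ?kapPr // !kap0 ?cnext_lt ?cprev_lt //.
have [->|[-> hk]] := @Dk v (kap v c r) ltac:(lia); [by left|right].
by rewrite -DsymN ?DsymP //; lia.
Qed.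

Lemma factC v c r : (0 < v)%N -> (c < v)%N -> (r < v)%N -> c <> r ->
  let d := cdist v c r in
  (cdist v (cnext v c) r = cdist v (cnext v 0) d /\ cdist v (cprev v c) r = cdist v (cprev v 0) d) \/
  (cdist v (cnext v c) r = cdist v (cprev v 0) d /\ cdist v (cprev v c) r = cdist v (cnext v 0) d).
Proof.
move=> v0 cv rv cr /=.
have kv := @kap_lt v c r v0.
have k0 : kap v c r != 0%N by rewrite kap_eq0 //; apply/eqP.
have dv : (cdist v c r < v)%N by rewrite cdistE // /D; lia.
have dv' : (D v (kap v c r) < v)%N by rewrite -cdistE.
rewrite !cdistE ?cnext_lt ?cprev_lt // !kapNl ?kapPl // !kap0 //.
have [->|[-> hk]] := @Dk v (kap v c r) ltac:(lia); [by left|right].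
by rewrite -DsymN ?DsymP //; lia.
Qed.

Lemma cdist_eq0 v x y : (0 < v)%N -> (x < v)%N -> (y < v)%N -> (cdist v x y == 0)%N = (x == y).
Proof. move=> *; rewrite cdistE // -(@kap_eq0 v x y) // /D. have := @kap_lt v x y ltac:(assumption); move=> kl; apply/idP/idP => /eqP h; apply/eqP; lia. Qed.

Lemma cdist_lt v x y : (0 < v)%N -> (x < v)%N -> (y < v)%N -> (cdist v x y < v)%N.
Proof. move=> *; rewrite cdistE // /D; have := @kap_lt v x y ltac:(assumption); lia. Qed.

Lemma cdist0d v x y : (0 < v)%N -> (x < v)%N -> (y < v)%N -> cdist v 0 (cdist v x y) = cdist v x y.
Proof.
move=> v0 xv yv; have dv := @cdist_lt v x y v0 xv yv.
rewrite (@cdistE v 0 (cdist v x y)) // kap0 // cdistE // /D.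
have := @kap_lt v x y v0; lia.
Qed.

Lemma greedy_cd v g c r : (0 < v)%N -> greedy_move v g -> (c < v)%N -> (r < v)%N -> c <> r ->
  cdist v (g c r) r = (cdist v c r).-1.
Proof.
move=> v0 gm cv rv cr; have [[e|e] lt] := gm c r cv rv cr; move: lt; rewrite e.
  rewrite !cdistE ?cnext_lt // kapNl //; have := @DP v (kap v c r) (@kap_lt v c r v0); lia.
rewrite !cdistE ?cprev_lt // kapPl //; have := @DN v (kap v c r) (@kap_lt v c r v0); lia.
Qed.

Lemma g_lt v g c r : (0 < v)%N -> greedy_move v g -> (c < v)%N -> (r < v)%N -> c <> r ->
  (g c r < v)%N.
Proof. move=> v0 gm cv rv cr; have [[->|->] _] := gm c r cv rv cr; [exact: cnext_lt|exact: cprev_lt]. Qed.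

Definition hh (R : realFieldType) v (th : R) g m rt n : R :=
  if (n == 0)%N then 0%R else surv v th g m rt 0 n.
Arguments hh {R}.

Lemma alive_eq (R : realFieldType) v (th : R) g m rt x y : (0 < v)%N ->
  (forall c r, (c < v)%N -> (r < v)%N -> c <> r -> surv v th g m rt c r = surv v th g m rt 0 (cdist v c r)) ->
  (x < v)%N -> (y < v)%N ->
  (if x == y then 0%R else surv v th g m rt x y) = hh v th g m rt (cdist v x y).
Proof.
move=> v0 IH xv yv; rewrite /hh cdist_eq0 //; case: eqP => // /eqP ne.
by apply: IH => // e; rewrite e eqxx in ne.
Qed.

Lemma canon (R : realFieldType) v (th : R) g m : (0 < v)%N -> greedy_move v g ->
  forall rt c r, (c < v)%N -> (r < v)%N -> c <> r ->
  surv v th g m rt c r = surv v th g m rt 0 (cdist v c r).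
Proof.
move=> v0 gm; elim: m => [//|m IH] rt c r cv rv cr.
have dv := @cdist_lt v c r v0 cv rv.
have d0 : 0%N <> cdist v c r.
  by move=> e; move: (@cdist_eq0 v c r v0 cv rv); rewrite -e eqxx => /esym/eqP.
have z0 : (0 < v)%N := v0.
case: rt => /=.
  rewrite !(@alive_eq R v th g m _ _ _ v0 (IH _)) ?cnext_lt ?cprev_lt //.
  by case: (@factR v c r v0 cv rv cr) => /= [[-> ->]|[-> ->]]; [done|rewrite addrC].
rewrite !(@alive_eq R v th g m _ _ _ v0 (IH _)) ?cnext_lt ?cprev_lt ?(@g_lt v g c r v0 gm) ?(@g_lt v g 0 (cdist v c r) v0 gm) //.
rewrite (@greedy_cd v g c r v0 gm) // (@greedy_cd v g 0 (cdist v c r) v0 gm) // cdist0d //.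
by case: (@factC v c r v0 cv rv cr) => /= [[-> ->]|[-> ->]]; [done| rewrite (addrC (hh _ _ _ _ _ _))].
Qed.

Lemma cds v i : (4 <= v)%N -> (1 <= i)%N -> (i <= v./2)%N ->
  [/\ cdist v 0 (cnext v i) = minn i.+1 (v - i.+1), cdist v 0 (cprev v i) = i.-1,
      cdist v (cnext v 0) i = i.-1, cdist v (cprev v 0) i = minn i.+1 (v - i.+1)
    & cdist v 0 i = i].
Proof. move=> *; rewrite /cdist /cnext /cprev; em v; split; lia. Qed.

Local Open Scope ring_scope.

Theorem mainTheorem6 (R : realFieldType) (v : nat) (th : R)
  (g : nat -> nat -> nat) (i m : nat) :
  (4 <= v)%N -> 0 <= th <= 1 -> greedy_move v g ->
  (1 <= i)%N -> (i <= v./2)%N -> (1 <= m)%N ->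
  let Rp := Rprob v th g in
  let Cp := Cprob v th g in
  (~~ odd v ->
     (i = 1%N -> Rp i m = 1/2 * Cp 2%N m.-1) /\
     ((1 < i < v./2)%N -> Rp i m = 1/2 * Cp i.-1 m.-1 + 1/2 * Cp i.+1 m.-1) /\
     (i = v./2 -> Rp i m = Cp (v./2).-1 m.-1) /\
     (i = 1%N -> Cp i m = th/2 * Rp 2%N m.-1) /\
     ((1 < i < v./2)%N ->
        Cp i m = (1 - th/2) * Rp i.-1 m.-1 + th/2 * Rp i.+1 m.-1) /\
     (i = v./2 -> Cp i m = Rp (v./2).-1 m.-1)) /\
  (odd v ->
     (i = 1%N -> Rp i m = 1/2 * Cp 2%N m.-1) /\
     ((1 < i < (v - 1)./2)%N ->
        Rp i m = 1/2 * Cp i.-1 m.-1 + 1/2 * Cp i.+1 m.-1) /\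
     (i = (v - 1)./2 ->
        Rp i m = 1/2 * Cp ((v - 3)./2) m.-1 + 1/2 * Cp ((v - 1)./2) m.-1) /\
     (i = 1%N -> Cp i m = th/2 * Rp 2%N m.-1) /\
     ((1 < i < (v - 1)./2)%N ->
        Cp i m = (1 - th/2) * Rp i.-1 m.-1 + th/2 * Rp i.+1 m.-1) /\
     (i = (v - 1)./2 ->
        Cp i m = (1 - th/2) * Rp ((v - 3)./2) m.-1 + th/2 * Rp ((v - 1)./2) m.-1)).
Proof.
move=> v4 th01 gm i1 iv m1 Rp Cp.
have v0 : (0 < v)%N by lia.
have iv' : (i < v)%N by lia.
have i0 : (0 : nat) <> i by lia.
case: m m1 => [//|m'] _.
have cR : surv v th g m'.+1 true 0 i =
   (hh v th g m' false (cdist v 0 (cnext v i)) + hh v th g m' false (cdist v 0 (cprev v i))) / 2.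
  by rewrite /= !(@alive_eq R v th g m' _ _ _ v0 (@canon R v th g m' v0 gm _)) ?cnext_lt ?cprev_lt.
have [e1 e2 e3 e4 e5] := @cds v i v4 i1 iv.
have cC : surv v th g m'.+1 false 0 i =
   th * ((hh v th g m' true (cdist v (cnext v 0) i) + hh v th g m' true (cdist v (cprev v 0) i)) / 2)
   + (1 - th) * hh v th g m' true i.-1.
  rewrite /= !(@alive_eq R v th g m' _ _ _ v0 (@canon R v th g m' v0 gm _)) ?cnext_lt ?cprev_lt
     ?(@g_lt v g 0 i v0 gm) //.
  by rewrite (@greedy_cd v g 0 i v0 gm) // e5.
have hS : forall rt j, (0 < j)%N -> surv v th g m' rt 0 j = hh v th g m' rt j.
  by move=> rt j j0; rewrite /hh; case: eqP => //; lia.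
have h0 : forall rt, hh v th g m' rt 0 = 0 by move=> rt; rewrite /hh eqxx.
rewrite /Rp /Cp /Rprob /Cprob cR cC e1 e2 e3 e4 /=.
split=> hv; (repeat split) => H.
all: cycle 0.
- rewrite (_ : (minn i.+1 (v - i.+1) = 2%N)%N); last by lia.
  rewrite (_ : i.-1 = 0%N); last by lia.
  rewrite h0 hS //; field; try done.
- rewrite (_ : (minn i.+1 (v - i.+1) = i.+1)%N); last by lia.
  rewrite !hS //; [field; try done|lia].
- rewrite (_ : (minn i.+1 (v - i.+1) = i.-1)%N); last by lia.
  rewrite (_ : ((v./2).-1 = i.-1)%N); last by lia.
  rewrite hS; [field; try done|lia].
- rewrite (_ : (minn i.+1 (v - i.+1) = 2%N)%N); last by lia.
  rewrite (_ : i.-1 = 0%N); last by lia.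
  rewrite h0 hS //; field; try done.
- rewrite (_ : (minn i.+1 (v - i.+1) = i.+1)%N); last by lia.
  rewrite !hS //; [field; try done|lia].
- rewrite (_ : (minn i.+1 (v - i.+1) = i.-1)%N); last by lia.
  rewrite (_ : ((v./2).-1 = i.-1)%N); last by lia.
  rewrite hS; [field; try done|lia].
- rewrite (_ : (minn i.+1 (v - i.+1) = 2%N)%N); last by lia.
  rewrite (_ : i.-1 = 0%N); last by lia.
  rewrite h0 hS //; field; try done.
- rewrite (_ : (minn i.+1 (v - i.+1) = i.+1)%N); last by lia.
  rewrite !hS //; [field; try done|lia].
- rewrite (_ : (minn i.+1 (v - i.+1) = i)%N); last by lia.
  rewrite (_ : (((v - 3)./2) = i.-1)%N); last by lia.
  rewrite (_ : (((v - 1)./2) = i)%N); last by lia.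
  rewrite !hS //; [field; try done|lia].
- rewrite (_ : (minn i.+1 (v - i.+1) = 2%N)%N); last by lia.
  rewrite (_ : i.-1 = 0%N); last by lia.
  rewrite h0 hS //; field; try done.
- rewrite (_ : (minn i.+1 (v - i.+1) = i.+1)%N); last by lia.
  rewrite !hS //; [field; try done|lia].
- rewrite (_ : (minn i.+1 (v - i.+1) = i)%N); last by lia.
  rewrite (_ : (((v - 3)./2) = i.-1)%N); last by lia.
  rewrite (_ : (((v - 1)./2) = i)%N); last by lia.
  rewrite !hS //; [field; try done|lia].
Qed.
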